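(* Let $(A,\triangleright,\triangleleft,\alpha)$ be a Hom-$L$-dendriform algebra. Define $x\cdot y=x\triangleright y+x\triangleleft y$ and $x\ast y=x\triangleright y-y\triangleleft x$ for $x,y\in A$. Then $(A,\cdot,\alpha)$ and $(A,\ast,\alpha)$ are both Hom-preLie algebras.
   Context: A Hom-$L$-dendriform algebra is a vector space $A$ with bilinear maps $\triangleleft,\triangleright:A\otimes A\to A$ and a linear map $\alpha:A\to A$ such that for all $x,y,z\in A$: $\alpha(x)\triangleright(y\triangleright z)=(x\triangleright y)\triangleright\alpha(z)+(x\triangleleft y)\triangleright\alpha(z)+\alpha(y)\triangleright(x\triangleright z)-(y\triangleleft x)\triangleright\alpha(z)-(y\triangleright x)\triangleright\alpha(z)$ and $\alpha(x)\triangleright(y\triangleleft z)=(x\triangleright y)\triangleleft\alpha(z)+\alpha(y)\triangleleft(x\triangleright z)+\alpha(y)\triangleleft(x\triangleleft z)-(y\triangleleft x)\triangleleft\alpha(z)$. A Hom-preLie algebra is a vector space $S$ with a bilinear product $\cdot$ and linear $\alpha$ such that $(x\cdot y)\cdot\alpha(z)-\alpha(x)\cdot(y\cdot z)=(y\cdot x)\cdot\alpha(z)-\alpha(y)\cdot(x\cdot z)$ for all $x,y,z$. *)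

(* Defs.v *)
From mathcomp Require Import all_boot all_order all_algebra.
Set Implicit Arguments. Unset Strict Implicit. Unset Printing Implicit Defensive.
Import GRing.Theory.
Local Open Scope ring_scope.

Definition bilinear_op (K : fieldType) (V : lmodType K) (m : V -> V -> V) : Prop :=
  (forall a : K, forall x y z : V, m (a *: x + y) z = a *: m x z + m y z) /\
  (forall a : K, forall x y z : V, m x (a *: y + z) = a *: m x y + m x z).

Definition linear_map (K : fieldType) (V : lmodType K) (f : V -> V) : Prop :=
  forall a : K, forall x y : V, f (a *: x + y) = a *: f x + f y.

Definition is_HomLDendriform (K : fieldType) (A : lmodType K)
    (rr ll : A -> A -> A) (alpha : A -> A) : Prop :=
  [/\ bilinear_op rr, bilinear_op ll, linear_map alpha,
   (forall x y z : A,
      rr (alpha x) (rr y z) =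
        rr (rr x y) (alpha z) + rr (ll x y) (alpha z) + rr (alpha y) (rr x z)
        - rr (ll y x) (alpha z) - rr (rr y x) (alpha z)) &
   (forall x y z : A,
      rr (alpha x) (ll y z) =
        ll (rr x y) (alpha z) + ll (alpha y) (rr x z) + ll (alpha y) (ll x z)
        - ll (ll y x) (alpha z))].

Definition is_HomPreLie (K : fieldType) (S : lmodType K)
    (m : S -> S -> S) (alpha : S -> S) : Prop :=
  [/\ bilinear_op m, linear_map alpha &
   forall x y z : S,
     m (m x y) (alpha z) - m (alpha x) (m y z) =
     m (m y x) (alpha z) - m (alpha y) (m x z)].

(* Main.v *)
Require Import Defs.
From mathcomp Require Import all_boot all_order all_algebra.
Import GRing.Theory.
Local Open Scope ring_scope.

Section Aux.
Variables (K : fieldType) (A : lmodType K) (m : A -> A -> A).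
Hypothesis hm : bilinear_op m.

Lemma m0l z : m 0 z = 0.
Proof.
case: hm => h _; have := h 1 0 0 z; rewrite !scale1r !addr0 => H.
by apply: (addrI (m 0 z)); rewrite addr0 -H.
Qed.
Lemma m0r z : m z 0 = 0.
Proof.
case: hm => _ h; have := h 1 z 0 0; rewrite !scale1r !addr0 => H.
by apply: (addrI (m z 0)); rewrite addr0 -H.
Qed.
Lemma mDl x y z : m (x + y) z = m x z + m y z.
Proof. by case: hm => h _; have := h 1 x y z; rewrite !scale1r. Qed.
Lemma mDr x y z : m z (x + y) = m z x + m z y.
Proof. by case: hm => _ h; have := h 1 z x y; rewrite !scale1r. Qed.
Lemma mNl x z : m (- x) z = - m x z.
Proof. by case: hm => h _; have := h (-1) x 0 z; rewrite m0l !addr0 !scaleN1r. Qed.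
Lemma mNr x z : m z (- x) = - m z x.
Proof. by case: hm => _ h; have := h (-1) z x 0; rewrite m0r !addr0 !scaleN1r. Qed.
End Aux.

Ltac zcancel :=
  apply/eqP; rewrite -subr_eq0; apply/eqP;
  rewrite ?opprD ?opprK ?addrA -[LHS]add0r ?addrA;
  repeat match goal with
  | |- context [- ?a] =>
      rewrite ?(addrAC _ a) ?(addrAC _ (- a)) addrK
  end; done.

Theorem mainTheorem11 (K : fieldType) (A : lmodType K)
    (rr ll : A -> A -> A) (alpha : A -> A) :
  is_HomLDendriform rr ll alpha ->
  is_HomPreLie (fun x y => rr x y + ll x y) alpha /\
  is_HomPreLie (fun x y => rr x y - ll y x) alpha.
Proof.
case=> hr hl ha h1 h2.
have [hr1 hr2] := hr; have [hl1 hl2] := hl.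
split; split => //.
- split=> a x y z.
  + rewrite /= hr1 hl1 scalerDr; zcancel.
  + rewrite /= hr2 hl2 scalerDr; zcancel.
- move=> x y z.
  rewrite /= !(@mDl _ _ _ hr, @mDr _ _ _ hr, @mDl _ _ _ hl, @mDr _ _ _ hl) h1 h2 h1 h2.
  zcancel.
- split=> a x y z.
  + rewrite /= hr1 hl2 scalerDr scalerN; zcancel.
  + rewrite /= hr2 hl1 scalerDr scalerN; zcancel.
- move=> x y z.
  rewrite /= !(@mDl _ _ _ hr, @mDr _ _ _ hr, @mDl _ _ _ hl, @mDr _ _ _ hl, @mNl _ _ _ hr, @mNr _ _ _ hr, @mNl _ _ _ hl, @mNr _ _ _ hl) h1 h2 h1 h2.
  zcancel.
Qed.
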